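(* Let $\mathbb{F}$ be a finite field with $q$ elements, let $\mathbb{M}$ be the group of complex-valued characters of $\mathbb{F}^*$, and define for $\alpha,\beta\in\mathbb{M}$ \[ \mathbb{J}(\alpha,\beta)=\frac{1}{q-1}\sum_{\substack{x+y=1,\\ x,y\in\mathbb{F}^*}}\alpha(x)\beta(y). \] Then for all $\alpha_1,\alpha_2,\alpha_3,\alpha_4\in\mathbb{M}$, \[ \sum_{\beta\in\mathbb{M}}\mathbb{J}(\alpha_1\beta,\alpha_2\beta^{-1})\,\mathbb{J}(\alpha_3\beta,\alpha_4\beta^{-1})=\mathbb{J}(\alpha_1\alpha_4,\alpha_2\alpha_3). \]
   Context: Products and inverses of characters are pointwise. *)

(* Defs.v *)
From mathcomp Require Import all_boot all_algebra all_fingroup all_field all_character.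
Set Implicit Arguments. Unset Strict Implicit. Unset Printing Implicit Defensive.
Import GRing.Theory Num.Theory.
Local Open Scope ring_scope.

(* The multiplicative group F^* of a finite field F is the finGroupType {unit F};
   its characters are class functions on [set: {unit F}] (values in algC). *)
Notation Fstar F := [set: {unit F}].

Definition jacobiJ (F : finFieldType) (a b : {unit F} -> algC) : algC :=
  ((#|F|.-1)%:R)^-1 *
  \sum_(x : {unit F}) \sum_(y : {unit F} | val x + val y == 1) a x * b y.

(* Main.v *)
Require Import Defs.
From mathcomp Require Import all_boot all_algebra all_fingroup all_field all_character.
From mathcomp Require Import ring.
Import GRing.Theory Num.Theory.
Local Open Scope ring_scope.

Lemma units_ab (F : finFieldType) : abelian (Fstar F).
Proof. by apply/centsP => x _ y _; apply: val_inj; rewrite /= mulrC. Qed.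

Lemma sum_chi (F : finFieldType) (g : {unit F}) :
  \sum_(i : Iirr (Fstar F)) 'chi_i g = (#|F|.-1)%:R *+ (g == 1%g).
Proof.
have := second_orthogonality_relation g (group1 (Fstar F)).
rewrite class1G inE -card_finField_unit.
have -> : ('C_(Fstar F)[g])%g = Fstar F.
  apply/setIidPl; rewrite sub_cent1; apply: (subsetP (units_ab F)); exact: in_setT.
move=> <-; apply: eq_bigr => i _.
by rewrite lin_char1 ?conjC1 ?mulr1 //; apply/char_abelianP/units_ab.
Qed.

Section Main.
Variable F : finFieldType.
Local Notation U := {unit F}.
Definition Sp (p : U * U) := val p.1 + val p.2 == 1.

Lemma jacE (a b : U -> algC) :
  jacobiJ a b = ((#|F|.-1)%:R)^-1 * \sum_(p | Sp p) a p.1 * b p.2.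
Proof. by rewrite /jacobiJ pair_big_dep. Qed.

Lemma key (p r : U * U) : Sp p -> Sp r ->
  ((p.1 * r.1 * (p.2 * r.2)^-1)%g == 1%g) = (r == (p.2, p.1)).
Proof.
case: p r => [x y] [u v]; rewrite /Sp /= => /eqP hp /eqP hr.
rewrite -val_eqE /= xpair_eqE -!val_eqE.
have yv0 : val y * val v != 0 by rewrite mulf_neq0 // -unitfE; apply: valP.
have E : forall a b : F, b != 0 -> (a / b == 1) = (a == b).
  by move=> a b hb; rewrite -(inj_eq (mulIf hb)) divfK // mul1r.
rewrite E; last exact: yv0.
apply/eqP/andP => [h|[/eqP -> /eqP ->]]; last by rewrite mulrC.
have hy : val y = 1 - val x by rewrite -hp addrC addKr.
have hv : val v = 1 - val u by rewrite -hr addrC addKr.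
have hu : val u = val y.
  have : val x + val u = 1.
    apply/eqP; rewrite -subr_eq0; apply/eqP.
    transitivity (val x * val u - val y * val v); first by rewrite hy hv; ring.
    by apply/eqP; rewrite subr_eq0; apply/eqP; exact: h.
  by move=> e; rewrite hy -e addrC addKr.
by split; apply/eqP => //; rewrite hv hu hy opprB addrC subrK.
Qed.

Lemma termE (a1 a2 a3 a4 : 'CF(Fstar F)) (i : Iirr (Fstar F)) (p r : U * U) :
  a1 p.1 * 'chi_i p.1 * (a2 p.2 * ('chi_i p.2)^-1) *
  (a3 r.1 * 'chi_i r.1 * (a4 r.2 * ('chi_i r.2)^-1))
  = (a1 p.1 * a2 p.2 * a3 r.1 * a4 r.2) * 'chi_i (p.1 * r.1 * (p.2 * r.2)^-1)%g.
Proof.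
have li : 'chi_i \is a linear_char by apply/char_abelianP/units_ab.
rewrite lin_charM ?in_setT // lin_charV ?in_setT // !lin_charM ?in_setT // invfM; ring.
Qed.
End Main.

Theorem mainTheorem4 (F : finFieldType) (a1 a2 a3 a4 : 'CF(Fstar F))
  (h1 : a1 \is a linear_char) (h2 : a2 \is a linear_char)
  (h3 : a3 \is a linear_char) (h4 : a4 \is a linear_char) :
  \sum_(i : Iirr (Fstar F) | 'chi_i \is a linear_char)
     jacobiJ (fun x => a1 x * 'chi_i x) (fun x => a2 x * ('chi_i x)^-1) *
     jacobiJ (fun x => a3 x * 'chi_i x) (fun x => a4 x * ('chi_i x)^-1)
  = jacobiJ (fun x => a1 x * a4 x) (fun x => a2 x * a3 x).
Proof.
set n : algC := (#|F|.-1)%:R.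
have n0 : n != 0.
  by rewrite pnatr_eq0 -lt0n -ltnS prednK ?card_finNzRing_gt1 // (ltn_trans _ (card_finNzRing_gt1 F)).
rewrite (eq_bigl xpredT); last by move=> i; apply/char_abelianP/units_ab.
under eq_bigr => i _ do rewrite !jacE mulrACA mulr_suml mulr_sumr.
rewrite jacE -/n.
under eq_bigr => i _ do under eq_bigr => p _ do rewrite mulr_sumr mulr_sumr.
pose c (p r : {unit F} * {unit F}) := a1 p.1 * a2 p.2 * a3 r.1 * a4 r.2.
pose g (p r : {unit F} * {unit F}) := (p.1 * r.1 * (p.2 * r.2)^-1)%g.
transitivity (\sum_(p | Sp F p) \sum_(r | Sp F r) n^-1 / n *
   (c p r * \sum_i 'chi[Fstar F]_i (g p r))).
  rewrite exchange_big; apply: eq_bigr => p _; rewrite exchange_big.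
  apply: eq_bigr => r _; rewrite mulr_sumr mulr_sumr; apply: eq_bigr => i _.
  by rewrite termE.
rewrite mulr_sumr; apply: eq_bigr => p Spp.
under eq_bigr => r Spr do rewrite sum_chi key //.
rewrite (bigD1 (p.2, p.1)) /=; last by rewrite /Sp /= addrC.
rewrite eqxx mulr1n big1 ?addr0; last first.
  by move=> r /andP[_ /negbTE ->]; rewrite mulr0n mulr0 mulr0.
rewrite -/n /c /=; field; exact: n0.
Qed.
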